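(* Let $n=m$ and $\rho=|\Psi\rangle\langle\Psi|$ with $|\Psi\rangle=\frac{1}{\sqrt m}\sum_{i=1}^m|i\rangle|i\rangle$ a maximally entangled state of $\mathbb{C}^m\otimes\mathbb{C}^m$. Then $D_P(\rho)=D_G(\rho)=\frac{m-1}{m}$.
   Context: Generators $\hat\lambda_i$ ($i=1,\dots,m^2-1$) of $SU(m)$ are Hermitian, traceless, with $\mathrm{Tr}(\hat\lambda_i\hat\lambda_j)=2\delta_{ij}$. For a state $\rho$ on $\mathbb{C}^m\otimes\mathbb{C}^n$, $x_i=\frac{m}{2}\mathrm{Tr}[(\hat\lambda_i^A\otimes\mathbb{I})\rho]$, $t_{ij}=\frac{mn}{4}\mathrm{Tr}[(\hat\lambda_i^A\otimes\hat\lambda_j^B)\rho]$, $T=(t_{ij})$, $\mathcal{T}=\sqrt{\frac{2}{m^2n}}\begin{pmatrix}\vec{x} & \sqrt{\frac{2}{n}}T\end{pmatrix}$; $D_P(\rho)=\min_P\|\mathcal{T}-P\mathcal{T}\|^2$ over rank-$(m-1)$ orthogonal projections $P$ on $\mathbb{R}^{m^2-1}$ (Frobenius norm). The geometric discord is $D_G(\rho)=\min_\chi\mathrm{Tr}(\rho-\chi)^2$ over zero-discord states $\chi=\sum_{k=1}^m p_k|k\rangle\langle k|\otimes\rho_k^B$ ($\{|k\rangle\}$ an orthonormal basis of the first factor, $p_k$ probabilities, $\rho_k^B$ states). *)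

(* Defs.v *)
From HB Require Import structures.
From mathcomp Require Import all_boot all_order all_algebra.
From mathcomp Require Import reals.
From mathcomp.real_closed Require Import complex mxtens.

Set Implicit Arguments.
Unset Strict Implicit.
Unset Printing Implicit Defensive.

Import Order.TTheory GRing.Theory Num.Theory.
Local Open Scope ring_scope.
Local Open Scope complex_scope.

Definition adjmx (R : rcfType) (p q : nat) (A : 'M[R[i]]_(p, q)) : 'M[R[i]]_(q, p) :=
  map_mx (fun z => z^*) A^T.

Definition hermitian (R : rcfType) (p : nat) (A : 'M[R[i]]_p) : Prop :=
  adjmx A = A.

(* positive semidefinite: <v, A v> >= 0 (in particular real) for all v *)
Definition psd (R : rcfType) (p : nat) (A : 'M[R[i]]_p) : Prop :=
  forall v : 'cV[R[i]]_p, 0 <= (adjmx v *m A *m v) 0 0.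

Definition is_state (R : rcfType) (p : nat) (A : 'M[R[i]]_p) : Prop :=
  psd A /\ \tr A = 1.

Definition unitary (R : rcfType) (p : nat) (U : 'M[R[i]]_p) : Prop :=
  adjmx U *m U = 1%:M.

Definition su_generators (R : rcfType) (p : nat)
    (lam : 'I_(p ^ 2 - 1) -> 'M[R[i]]_p) : Prop :=
  (forall k, hermitian (lam k)) /\ (forall k, \tr (lam k) = 0) /\
  (forall k l, \tr (lam k *m lam l) = (2 * (k == l)%:R)%:C).

Definition bloch_x (R : rcfType) (m n : nat)
    (lamA : 'I_(m ^ 2 - 1) -> 'M[R[i]]_m) (rho : 'M[R[i]]_(m * n))
    : 'cV[R]_(m ^ 2 - 1) :=
  \col_k complex.Re ((m%:R / 2)%:C * \tr ((lamA k *t (1%:M : 'M[R[i]]_n)) *m rho)).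

Definition bloch_T (R : rcfType) (m n : nat)
    (lamA : 'I_(m ^ 2 - 1) -> 'M[R[i]]_m) (lamB : 'I_(n ^ 2 - 1) -> 'M[R[i]]_n)
    (rho : 'M[R[i]]_(m * n)) : 'M[R]_(m ^ 2 - 1, n ^ 2 - 1) :=
  \matrix_(k, l) complex.Re (((m * n)%:R / 4)%:C * \tr ((lamA k *t lamB l) *m rho)).

Definition bloch_calT (R : rcfType) (m n : nat)
    (lamA : 'I_(m ^ 2 - 1) -> 'M[R[i]]_m) (lamB : 'I_(n ^ 2 - 1) -> 'M[R[i]]_n)
    (rho : 'M[R[i]]_(m * n)) : 'M[R]_(m ^ 2 - 1, 1 + (n ^ 2 - 1)) :=
  Num.sqrt (2 / (m ^ 2 * n)%:R) *:
    row_mx (bloch_x lamA rho) (Num.sqrt (2 / n%:R) *: bloch_T lamA lamB rho).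

Definition frob2 (R : rcfType) (p q : nat) (A : 'M[R]_(p, q)) : R :=
  \sum_i \sum_j A i j ^+ 2.

Definition orth_proj (R : rcfType) (p r : nat) (P : 'M[R]_p) : Prop :=
  P^T = P /\ P *m P = P /\ \rank P = r.

Definition DP_is (R : rcfType) (m n : nat)
    (lamA : 'I_(m ^ 2 - 1) -> 'M[R[i]]_m) (lamB : 'I_(n ^ 2 - 1) -> 'M[R[i]]_n)
    (rho : 'M[R[i]]_(m * n)) (d : R) : Prop :=
  let calT := bloch_calT lamA lamB rho in
  (exists P, orth_proj (m - 1) P /\ frob2 (calT - P *m calT) = d) /\
  (forall P, orth_proj (m - 1) P -> d <= frob2 (calT - P *m calT)).

Definition zero_discord (R : rcfType) (m n : nat) (chi : 'M[R[i]]_(m * n)) : Prop :=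
  exists (U : 'M[R[i]]_m) (pr : 'I_m -> R) (rhoB : 'I_m -> 'M[R[i]]_n),
    [/\ unitary U, (forall k, 0 <= pr k), \sum_k pr k = 1,
        (forall k, is_state (rhoB k)) &
        chi = \sum_k ((pr k)%:C *: ((col k U *m adjmx (col k U)) *t rhoB k))].

Definition DG_is (R : rcfType) (m n : nat) (rho : 'M[R[i]]_(m * n)) (d : R) : Prop :=
  (exists chi : 'M[R[i]]_(m * n), zero_discord chi /\ \tr ((rho - chi) *m (rho - chi)) = d%:C) /\
  (forall chi : 'M[R[i]]_(m * n), zero_discord chi -> d%:C <= \tr ((rho - chi) *m (rho - chi))).

Definition max_ent_vec (R : rcfType) (m : nat) : 'cV[R[i]]_(m * m) :=
  ((Num.sqrt (m%:R : R))^-1)%:C *: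
    \sum_(k < m) ((delta_mx k 0 : 'cV[R[i]]_m) *t (delta_mx k 0 : 'cV[R[i]]_m)).

Definition max_ent_state (R : rcfType) (m : nat) : 'M[R[i]]_(m * m) :=
  max_ent_vec R m *m adjmx (max_ent_vec R m).

(* Main.v *)
Require Import Defs.
From HB Require Import structures.
From mathcomp Require Import all_boot all_order all_algebra.
From mathcomp Require Import reals.
From mathcomp.real_closed Require Import complex mxtens.
From mathcomp Require Import ring lra.
Import Order.TTheory GRing.Theory Num.Theory.
Local Open Scope ring_scope.

Set Implicit Arguments.
Unset Strict Implicit.
Unset Printing Implicit Defensive.

Section Aux.
Variable R : rcfType.
Local Notation C := R[i].
Local Open Scope complex_scope.

Lemma adjmxE p q (A : 'M[C]_(p, q)) i j : adjmx A i j = conjc (A j i).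
Proof. by rewrite /adjmx !mxE. Qed.

Lemma adjmxD p q (A B : 'M[C]_(p, q)) : adjmx (A + B) = adjmx A + adjmx B.
Proof. by apply/matrixP=> i j; rewrite !(adjmxE, mxE) rmorphD. Qed.

Lemma adjmxN p q (A : 'M[C]_(p, q)) : adjmx (- A) = - adjmx A.
Proof. by apply/matrixP=> i j; rewrite !(adjmxE, mxE) rmorphN. Qed.

Lemma adjmxB p q (A B : 'M[C]_(p, q)) : adjmx (A - B) = adjmx A - adjmx B.
Proof. by rewrite adjmxD adjmxN. Qed.

Lemma adjmxZ p q c (A : 'M[C]_(p, q)) : adjmx (c *: A) = conjc c *: adjmx A.
Proof. by apply/matrixP=> i j; rewrite !(adjmxE, mxE) rmorphM. Qed.

Lemma adjmxM p q r (A : 'M[C]_(p, q)) (B : 'M[C]_(q, r)) :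
  adjmx (A *m B) = adjmx B *m adjmx A.
Proof.
apply/matrixP=> i j; rewrite !(adjmxE, mxE) rmorph_sum; apply: eq_bigr => k _.
by rewrite !adjmxE rmorphM mulrC.
Qed.

Lemma adjmxK p q (A : 'M[C]_(p, q)) : adjmx (adjmx A) = A.
Proof. by apply/matrixP=> i j; rewrite !adjmxE conjcK. Qed.

Lemma adjmx_tr p q (A : 'M[C]_(p, q)) : adjmx A^T = (adjmx A)^T.
Proof. by apply/matrixP=> i j; rewrite !(adjmxE, mxE). Qed.

Lemma adjmx_sum p q (I : finType) (F : I -> 'M[C]_(p, q)) :
  adjmx (\sum_i F i) = \sum_i adjmx (F i).
Proof.
apply/matrixP=> i j; rewrite adjmxE !summxE rmorph_sum.
by apply: eq_bigr => k _; rewrite adjmxE.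
Qed.

Lemma adjmx_tens p q r s (A : 'M[C]_(p, q)) (B : 'M[C]_(r, s)) :
  adjmx (A *t B) = adjmx A *t adjmx B.
Proof. by apply/matrixP=> i j; rewrite !(adjmxE, mxE) rmorphM. Qed.

Lemma adjmx_delta p q (i : 'I_p) (j : 'I_q) :
  adjmx (delta_mx i j : 'M[C]_(p, q)) = delta_mx j i.
Proof.
apply/matrixP=> a b; rewrite !(adjmxE, mxE) conjc_nat andbC.
by [].
Qed.

Lemma adjmx1 p : adjmx (1%:M : 'M[C]_p) = 1%:M.
Proof.
apply/matrixP=> a b; rewrite !(adjmxE, mxE) conjc_nat eq_sym.
by [].
Qed.

Lemma tr_tens p q (A : 'M[C]_p) (B : 'M[C]_q) : \tr (A *t B) = \tr A * \tr B.
Proof.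
rewrite /mxtrace mulr_sum; apply: eq_bigr => i _; rewrite mxE //.
Qed.

Lemma tr11 (A : 'M[C]_1) : \tr A = A 0 0.
Proof. by rewrite /mxtrace big_ord1. Qed.

Lemma mul11 p (A : 'M[C]_(1, p)) (B : 'M[C]_(p, 1)) :
  (A *m B) 0 0 = \sum_k A 0 k * B k 0.
Proof. by rewrite mxE. Qed.

Lemma tr_vec p (X : 'M[C]_p) (v : 'cV[C]_p) :
  \tr (X *m (v *m adjmx v)) = (adjmx v *m X *m v) 0 0.
Proof. by rewrite mulmxA mxtrace_mulC mulmxA tr11. Qed.

Lemma sum_tens (V : nmodType) p q (F : 'I_(p * q) -> V) :
  \sum_i F i = \sum_(a < p) \sum_(b < q) F (mxtens_index (a, b)).
Proof.
rewrite pair_big /= (reindex (fun ab : 'I_p * 'I_q => mxtens_index ab)) /=.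
  by apply: eq_bigr => -[a b] _.
by exists (@mxtens_unindex p q) => x _; rewrite (mxtens_indexK, mxtens_unindexK).
Qed.

Lemma tr_mulT p (A B : 'M[C]_p) : \tr (A *m B^T) = \sum_a \sum_k A a k * B a k.
Proof. by apply: eq_bigr => a _; rewrite mxE; apply: eq_bigr => k _; rewrite mxE. Qed.

Lemma tr_adj_ge0 p q (A : 'M[C]_(p, q)) : 0 <= \tr (A *m adjmx A).
Proof.
apply: sumr_ge0 => i _; rewrite mxE; apply: sumr_ge0 => j _.
by rewrite adjmxE mulcJ_ge0.
Qed.

Lemma tens_delta p (k l : 'I_p) :
  (delta_mx k 0 : 'cV[C]_p) *t (delta_mx l 0 : 'cV[C]_p) =
  delta_mx (mxtens_index (k, l)) 0.
Proof.
apply/matrixP=> i j; case: (mxtens_indexP i) => a b.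
rewrite !mxE mxtens_indexK /= !ord1 !eqxx !andbT.
have -> : (mxtens_index (a, b) == mxtens_index (k, l)) = ((a == k) && (b == l)).
  apply/eqP/andP => [/(congr1 (@mxtens_unindex _ _))|[/eqP-> /eqP->] //].
  by rewrite !mxtens_indexK => -[-> ->].
by case: (a == k); case: (b == l); rewrite /= ?mulr1 ?mulr0 ?mul0r.
Qed.

Lemma delta_form p q (X : 'M[C]_(p, q)) a b :
  ((delta_mx 0 a : 'rV[C]_p) *m X *m (delta_mx b 0 : 'cV[C]_q)) 0 0 = X a b.
Proof. by rewrite -rowE -colE !mxE. Qed.

Definition psi_c (m : nat) : C := ((Num.sqrt (m%:R : R))^-1)%:C.

Lemma psi_cc m : conjc (psi_c m) * psi_c m = (m%:R)^-1.
Proof.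
rewrite /psi_c conjc_real -rmorphM /= -invfM -expr2 sqr_sqrtr ?ler0n //.
by rewrite fmorphV /= rmorph_nat.
Qed.

Lemma max_ent_vecE m :
  max_ent_vec R m = psi_c m *: \sum_(k < m) delta_mx (mxtens_index (k, k)) 0.
Proof. by rewrite /max_ent_vec; congr (_ *: _); apply: eq_bigr => k _; rewrite tens_delta. Qed.

Lemma psi_form m (X : 'M[C]_(m * m)) :
  (adjmx (max_ent_vec R m) *m X *m max_ent_vec R m) 0 0 =
  (m%:R)^-1 * \sum_a \sum_k X (mxtens_index (a, a)) (mxtens_index (k, k)).
Proof.
rewrite max_ent_vecE adjmxZ adjmx_sum -scalemxAl -scalemxAl -scalemxAr.
rewrite scalerA mxE psi_cc; congr (_ * _).
rewrite mulmx_suml mulmx_suml summxE; apply: eq_bigr => a _.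
rewrite mulmx_sumr summxE; apply: eq_bigr => k _.
by rewrite adjmx_delta delta_form.
Qed.

Lemma tr_rho m (X : 'M[C]_(m * m)) :
  \tr (X *m max_ent_state R m) =
  (m%:R)^-1 * \sum_a \sum_k X (mxtens_index (a, a)) (mxtens_index (k, k)).
Proof. by rewrite /max_ent_state tr_vec psi_form. Qed.

Lemma tr_tens_rho m (A B : 'M[C]_m) :
  \tr ((A *t B) *m max_ent_state R m) = (m%:R)^-1 * \tr (A *m B^T).
Proof.
rewrite tr_rho tr_mulT; congr (_ * _); apply: eq_bigr => a _.
by apply: eq_bigr => k _; rewrite tensmxE.
Qed.

Lemma sum_delta_diag m (x : 'I_m) :
  \sum_(k < m) (delta_mx (mxtens_index (k, k)) 0 : 'cV[C]_(m * m)) (mxtens_index (x, x)) ord0 = 1.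
Proof.
rewrite (bigD1 x) //= mxE !eqxx /= big1 ?addr0 // => k /negbTE kx; rewrite mxE.
case: eqP => // /(congr1 (@mxtens_unindex _ _)); rewrite !mxtens_indexK => -[].
by move=> xk; rewrite xk eqxx in kx.
Qed.

Lemma rho_entry m a b :
  max_ent_state R m (mxtens_index (a, a)) (mxtens_index (b, b)) = (m%:R)^-1.
Proof.
rewrite /max_ent_state mxE big_ord1 adjmxE max_ent_vecE !mxE !summxE.
by rewrite !sum_delta_diag !mulr1 mulrC psi_cc.
Qed.

Lemma tr_rho_rho m : (0 < m)%N ->
  \tr (max_ent_state R m *m max_ent_state R m) = 1.
Proof.
move=> m0; rewrite tr_rho.
under eq_bigr => a _ do under eq_bigr => k _ do rewrite rho_entry.
rewrite !sumr_const !card_ord -[_ *+ m]mulr_natr -[_ *+ m]mulr_natr.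
have mn0 : (m%:R : C) != 0 by rewrite pnatr_eq0 -lt0n.
by field.
Qed.

Lemma ge0_conj (z : C) : 0 <= z -> conjc z = z.
Proof.
case: z => x y /ger0_Im /= ->; by rewrite oppr0.
Qed.

Lemma cD (x y : C) : conjc (x + y) = conjc x + conjc y. Proof. exact: rmorphD. Qed.
Lemma cM (x y : C) : conjc (x * y) = conjc x * conjc y. Proof. exact: rmorphM. Qed.
Lemma cN (x : C) : conjc (- x) = - conjc x. Proof. exact: rmorphN. Qed.
Lemma c1 : conjc (1 : C) = 1. Proof. exact: rmorph1. Qed.

Lemma conjci : conjc 'i%C = - 'i%C :> C.
Proof. by rewrite /= -[RHS]/(Complex (- 0) (- 1)) oppr0. Qed.

Lemma entD p q (A B : 'M[C]_(p, q)) i j : (A + B) i j = A i j + B i j.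
Proof. by rewrite mxE. Qed.

Lemma entZ p q c (A : 'M[C]_(p, q)) i j : (c *: A) i j = c * A i j.
Proof. by rewrite mxE. Qed.

Lemma qform p (A : 'M[C]_p) a b c :
  let v := (delta_mx a 0 : 'cV[C]_p) + c *: delta_mx b 0 in
  (adjmx v *m A *m v) 0 0 =
  A a a + c * A a b + conjc c * A b a + conjc c * c * A b b.
Proof.
rewrite /= adjmxD adjmxZ !adjmx_delta !(mulmxDl, mulmxDr) -!scalemxAl -!scalemxAr.
rewrite !entD !entZ !delta_form; ring.
Qed.

Lemma psd_herm p (A : 'M[C]_p) : psd A -> adjmx A = A.
Proof.
move=> hA; apply/matrixP => b a; rewrite adjmxE.
have := hA (delta_mx a 0 + 0 *: delta_mx b 0); rewrite qform => /ge0_conj.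
rewrite /= oppr0 !mul0r !addr0 => ha.
have := hA (delta_mx b 0 + 0 *: delta_mx a 0); rewrite qform => /ge0_conj.
rewrite /= oppr0 !mul0r !addr0 => hb.
have := hA (delta_mx a 0 + 1 *: delta_mx b 0); rewrite qform => /ge0_conj.
move=> e1; rewrite !cD !cM !c1 ha hb !mul1r in e1.
have := hA (delta_mx a 0 + 'i%C *: delta_mx b 0); rewrite qform => /ge0_conj.
move=> e2; rewrite !cD !cM conjcK conjci ha hb in e2.
set x := conjc (A a b) in e1 e2 *; set y := conjc (A b a) in e1 e2 *.
have e1' : x + y = A a b + A b a.
  by apply: (addrI (A a a)); apply: (addIr (A b b)); rewrite !addrA.
have i0 : 'i%C != 0 :> C by rewrite eq_complex /= oner_eq0 andbF.
have e3 : y - x = A a b - A b a.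
  apply: (mulfI i0); apply/eqP; rewrite -subr_eq0.
  have -> : 'i%C * (y - x) - 'i%C * (A a b - A b a) =
    (A a a + - 'i%C * x + 'i%C * y + 'i%C * - 'i%C * A b b) -
    (A a a + 'i%C * A a b + - 'i%C * A b a + - 'i%C * 'i%C * A b b) by ring.
  by rewrite e2 subrr.
have t0 : (2 : C) != 0 by rewrite pnatr_eq0.
have -> : x = ((x + y) - (y - x)) / 2 by field.
rewrite e1' e3; by field.
Qed.



Definition projc p (U : 'M[C]_p) k := col k U *m adjmx (col k U).

Lemma colU_dot p (U : 'M[C]_p) k l :
  (adjmx (col k U) *m col l U) 0 0 = (adjmx U *m U) k l.
Proof. by rewrite !mxE; apply: eq_bigr => j _; rewrite !adjmxE !mxE. Qed.

Lemma trPP p (U : 'M[C]_p) : unitary U -> forall k l,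
  \tr (projc U k *m projc U l) = (k == l)%:R.
Proof.
move=> hU k l; rewrite /projc -!mulmxA mxtrace_mulC !mulmxA tr11 -mulmxA.
rewrite (_ : adjmx (col k U) *m (col l U *m adjmx (col l U)) *m col k U = (adjmx (col k U) *m col l U) *m (adjmx (col l U) *m col k U)); last by rewrite !mulmxA.
rewrite mul11 big_ord1.
rewrite !colU_dot hU !mxE eq_sym.
by case: (l == k); rewrite ?mulr1 ?mulr0.
Qed.

Lemma trP p (U : 'M[C]_p) : unitary U -> forall k, \tr (projc U k) = 1.
Proof. by move=> hU k; rewrite /projc mxtrace_mulC tr11 colU_dot hU mxE eqxx. Qed.

Lemma projc_herm p (U : 'M[C]_p) k : adjmx (projc U k) = projc U k.
Proof. by rewrite /projc adjmxM adjmxK. Qed.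

Lemma conjc_invn n : conjc ((n%:R : C)^-1) = (n%:R)^-1.
Proof. by rewrite fmorphV /= conjc_nat. Qed.

Lemma herm_tr_adj p (M : 'M[C]_p) : adjmx M = M -> 0 <= \tr (M *m M).
Proof. by move=> h; rewrite -{2}h tr_adj_ge0. Qed.

Lemma trB p (A B : 'M[C]_p) : \tr (A - B) = \tr A - \tr B.
Proof. exact: raddfB. Qed.

Lemma sum_lin (n : nat) (a b : 'I_n -> C) c e :
  \sum_k (a k - c * b k + e) = \sum_k a k - c * \sum_k b k + e *+ n.
Proof. by rewrite big_split sumrB /= -mulr_sumr sumr_const card_ord. Qed.

Lemma realC_d (m : nat) : ((m%:R - 1) / m%:R : R)%:C = (m%:R - 1) / m%:R :> C.
Proof. by rewrite rmorphM rmorphB /= rmorph1 fmorphV /= rmorph_nat. Qed.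

Lemma trT_formula m (hm : (0 < m)%N) (U : 'M[C]_m) (pr : 'I_m -> R)
   (sig : 'I_m -> 'M[C]_m) : unitary U ->
  \tr ((max_ent_state R m - \sum_k (pr k)%:C *: ((col k U *m adjmx (col k U)) *t sig k)) *m
       (max_ent_state R m - \sum_k (pr k)%:C *: ((col k U *m adjmx (col k U)) *t sig k)))
  = 1 - 2 * (m%:R)^-1 * (\sum_k (pr k)%:C * \tr (projc U k *m (sig k)^T))
    + \sum_k (pr k)%:C ^+ 2 * \tr (sig k *m sig k).
Proof.
move=> hU; set rho := max_ent_state R m.
have trchirho : \tr ((\sum_k (pr k)%:C *: ((col k U *m adjmx (col k U)) *t sig k)) *m rho)
   = (m%:R)^-1 * \sum_k (pr k)%:C * \tr (projc U k *m (sig k)^T).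
  rewrite mulmx_suml raddf_sum /= mulr_sumr; apply: eq_bigr => k _.
  by rewrite -scalemxAl mxtraceZ tr_tens_rho -/(projc U k) mulrCA.
have trchichi : \tr ((\sum_k (pr k)%:C *: ((col k U *m adjmx (col k U)) *t sig k)) *m
     (\sum_k (pr k)%:C *: ((col k U *m adjmx (col k U)) *t sig k)))
   = \sum_k (pr k)%:C ^+ 2 * \tr (sig k *m sig k).
  rewrite mulmx_suml raddf_sum /=; apply: eq_bigr => k _.
  rewrite mulmx_sumr raddf_sum /= (bigD1 k) //= big1 ?addr0.
    rewrite -scalemxAl -scalemxAr scalerA mxtraceZ tensmx_mul tr_tens -/(projc U k).
    by rewrite trPP // eqxx mul1r expr2.
  move=> l /negbTE nl; rewrite -scalemxAl -scalemxAr scalerA mxtraceZ tensmx_mul tr_tens.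
  by rewrite -/(projc U k) -/(projc U l) trPP // eq_sym nl mul0r mulr0.
set X := \sum_k _ in trchirho trchichi *.
have trrc : \tr (rho *m X) = (m%:R)^-1 * \sum_k (pr k)%:C * \tr (projc U k *m (sig k)^T).
  by rewrite mxtrace_mulC trchirho.
rewrite mulmxBl !mulmxBr !trB trrc trchirho trchichi tr_rho_rho //; ring.
Qed.

Lemma DG_lower m (hm : (0 < m)%N) (chi : 'M[C]_(m * m)) : zero_discord chi ->
  ((m%:R - 1) / m%:R : R)%:C <=
  \tr ((max_ent_state R m - chi) *m (max_ent_state R m - chi)).
Proof.
case=> U [pr [sig [hU hp hs hsig ->]]].
rewrite trT_formula //.
have mn0 : (m%:R : C) != 0 by rewrite pnatr_eq0 -lt0n.
pose W k := (projc U k)^T.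
pose M k := (pr k)%:C *: sig k - (m%:R)^-1 *: W k.
have hermS k : adjmx (sig k) = sig k by apply: psd_herm; case: (hsig k).
have hM k : adjmx (M k) = M k.
  by rewrite /M adjmxB !adjmxZ conjc_real conjc_invn adjmx_tr projc_herm hermS.
have trMM k : \tr (M k *m M k) = (pr k)%:C ^+ 2 * \tr (sig k *m sig k)
   - (2 * (m%:R)^-1) * ((pr k)%:C * \tr (projc U k *m (sig k)^T))
   + (m%:R)^-1 * (m%:R)^-1.
  have g1 : \tr (sig k *m W k) = \tr (projc U k *m (sig k)^T).
    by rewrite -mxtrace_tr trmx_mul trmxK.
  have g2 : \tr (W k *m sig k) = \tr (projc U k *m (sig k)^T).
    by rewrite mxtrace_mulC g1.
  have g3 : \tr (W k *m W k) = 1 by rewrite /W -trmx_mul mxtrace_tr trPP // eqxx.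
  rewrite /M mulmxBl !mulmxBr -!scalemxAl -!scalemxAr !scalerA !trB !mxtraceZ.
  rewrite g1 g2 g3; ring.
have sumM : 0 <= \sum_k \tr (M k *m M k).
  by apply: sumr_ge0 => k _; apply: herm_tr_adj.
set S1 := \sum_k _ ^+ 2 * _.
set S2 := \sum_k _ * _.
rewrite realC_d -subr_ge0.
suff -> : 1 - 2 * (m%:R)^-1 * S2 + S1 - (m%:R - 1) / m%:R =
   \sum_k \tr (M k *m M k) by [].
rewrite (eq_bigr _ (fun k _ => trMM k)) sum_lin -/S1 -/S2 -[_ *+ m]mulr_natr.
by field.
Qed.

Lemma sum_constC (n : nat) (c : C) : \sum_(k < n) c = c * n%:R.
Proof. by rewrite sumr_const card_ord mulr_natr. Qed.

Lemma tr_delta p (k : 'I_p) : \tr (delta_mx k k : 'M[C]_p) = 1.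
Proof.
rewrite /mxtrace (bigD1 k) //= mxE !eqxx big1 ?addr0 // => i /negbTE ik.
by rewrite mxE ik.
Qed.

Lemma DG_exist m (hm : (0 < m)%N) : exists chi : 'M[C]_(m * m),
  zero_discord chi /\
  \tr ((max_ent_state R m - chi) *m (max_ent_state R m - chi)) =
  ((m%:R - 1) / m%:R : R)%:C.
Proof.
have mn0 : (m%:R : C) != 0 by rewrite pnatr_eq0 -lt0n.
have mn0' : (m%:R : R) != 0 by rewrite pnatr_eq0 -lt0n.
pose pr := fun _ : 'I_m => (m%:R : R)^-1.
pose sig := fun k : 'I_m => (delta_mx k k : 'M[C]_m).
have hU : unitary (1%:M : 'M[C]_m) by rewrite /unitary adjmx1 mul1mx.
exists (\sum_k (pr k)%:C *: ((col k 1%:M *m adjmx (col k 1%:M)) *t sig k)).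
split.
  exists 1%:M, pr, sig; split => //.
  - by move=> k; rewrite /pr invr_ge0 ler0n.
  - by rewrite /pr sumr_const card_ord; apply: (mulfI mn0'); rewrite mulr1 mulrnAr mulfV.
  - move=> k; split; last by rewrite tr_delta.
    move=> v; rewrite /sig.
    have -> : delta_mx k k = (delta_mx k 0 : 'cV[C]_m) *m delta_mx 0 k by rewrite mul_delta_mx.
    rewrite mulmxA -mulmxA mul11 big_ord1 -rowE -colE !mxE mulrC.
    exact: mulcJ_ge0.
rewrite trT_formula // realC_d.
have PK k : projc 1%:M k = delta_mx k k :> 'M[C]_m.
  by rewrite /projc col1 adjmx_delta mul_delta_mx.
under eq_bigr => k _ do rewrite PK /sig trmx_delta mul_delta_mx tr_delta mulr1.
under [X in _ + X]eq_bigr => k _ do rewrite /sig mul_delta_mx tr_delta mulr1.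
rewrite /pr /= !sum_constC fmorphV /= rmorph_nat.
by field.
Qed.

Lemma sum_mxvec (V : nmodType) p q (F : 'I_(p * q) -> V) :
  \sum_i F i = \sum_(a < p) \sum_(b < q) F (mxvec_index a b).
Proof.
rewrite pair_big /= (reindex (uncurry (@mxvec_index p q))) /=.
  by apply: eq_bigr => -[a b] _.
case: (curry_mxvec_bij p q) => g h1 h2.
by exists g => x _; [apply: h1 | apply: h2].
Qed.

Lemma tr_mxvec p (A B : 'M[C]_p) :
  \sum_j mxvec A 0 j * mxvec B^T 0 j = \tr (A *m B).
Proof.
rewrite sum_mxvec /mxtrace; apply: eq_bigr => a _; rewrite mxE.
by apply: eq_bigr => b _; rewrite !mxvecE mxE.
Qed.

Lemma complete_sum p (hp : (0 < p)%N) (mu : 'I_(p ^ 2 - 1) -> 'M[C]_p)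
  (hmu0 : forall k, \tr (mu k) = 0)
  (hmu : forall k l, \tr (mu k *m mu l) = (2 * (k == l)%:R : R)%:C)
  (A B : 'M[C]_p) : \tr A = 0 ->
  \tr (A *m B) = \sum_k \tr (A *m mu k) / 2 * \tr (mu k *m B).
Proof.
move=> hA.
set N := (p ^ 2 - 1)%N.
pose f (i : 'I_(N + 1)) : 'M[C]_p :=
  match split i with inl k => mu k | inr _ => 1%:M end.
pose g (i : 'I_(N + 1)) : C := match split i with inl _ => 2 | inr _ => p%:R end.
have sl k : split (lshift 1 k) = inl _ k := unsplitK (inl _ k).
have sr k : split (rshift N k) = inr _ k := unsplitK (inr _ k).
have g0 i : g i != 0.
  by rewrite /g; case: split => _; rewrite pnatr_eq0 // -lt0n.
have gram i l : \tr (f i *m f l) = (i == l)%:R * g l.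
  rewrite -(splitK i) -(splitK l) /f /g !unsplitK (inj_eq (can_inj unsplitK)).
  case: (split i) => a; case: (split l) => b /=.
  - have ieq : forall x y : 'I_N, (inl _ x == inl _ y :> 'I_N + 'I_1) = (x == y).
      by move=> x y; apply/eqP/eqP => [[]|->].
    rewrite hmu rmorphM /= mulrC ieq; congr (_ * _); first by case: (a == b).
    by rewrite rmorph_nat.
  - by rewrite mulmx1 hmu0 mul0r.
  - by rewrite mul1mx hmu0 mul0r.
  - by rewrite mulmx1 mxtrace1 [a]ord1 [b]ord1 eqxx mul1r.
pose L := \matrix_(i < N + 1, j < p * p) mxvec (f i) 0 j.
pose K := \matrix_(j < p * p, l < N + 1) (mxvec (f l)^T 0 j / g l).
have LK : L *m K = 1%:M.
  apply/matrixP => i l; rewrite !mxE.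
  under eq_bigr => j _ do rewrite !mxE mulrA.
  by rewrite -mulr_suml tr_mxvec gram -mulrA mulfV // mulr1.
have rfree : row_free L by apply/row_freeP; exists K.
have NP : (N + 1 = p * p)%N by rewrite /N subnK ?expn_gt0 ?hp // mulnn.
have rfull : row_full L by rewrite /row_full (eqP rfree) NP.
have [D hD] : exists D : 'rV[C]_(N + 1), mxvec A = D *m L.
  by apply/submxP; apply: submx_full.
have AE : A = \sum_i D 0 i *: f i.
  apply/matrixP => a b.
  have := congr1 (fun v : 'rV_(p * p) => v 0 (mxvec_index a b)) hD.
  rewrite /= mxvecE => ->; rewrite !mxE summxE; apply: eq_bigr => i _.
  by rewrite !mxE mxvecE.
have DE i : D 0 i = \tr (A *m f i) / g i.
  rewrite {1}AE mulmx_suml raddf_sum /= (bigD1 i) //= big1 ?addr0.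
    by rewrite -scalemxAl mxtraceZ gram eqxx mul1r mulfK.
  by move=> j /negbTE ji; rewrite -scalemxAl mxtraceZ gram ji mul0r mulr0.
rewrite {1}AE mulmx_suml raddf_sum /= big_split_ord /= big_ord1.
rewrite -scalemxAl mxtraceZ DE /f /g sr mulmx1 hA mul0r mul0r addr0.
by apply: eq_bigr => k _; rewrite -scalemxAl mxtraceZ DE /f /g sl.
Qed.

Lemma conj_tr p (M : 'M[C]_p) : conjc (\tr M) = \tr (map_mx conjc M).
Proof. by rewrite /mxtrace rmorph_sum; apply: eq_bigr => i _; rewrite mxE. Qed.

Lemma herm_map p (X : 'M[C]_p) : Defs.hermitian X -> map_mx conjc X = X^T.
Proof. by move=> hX; rewrite -{2}hX /adjmx -map_trmx trmxK. Qed.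

Lemma herm_tr_real p (X Y : 'M[C]_p) : Defs.hermitian X -> Defs.hermitian Y ->
  conjc (\tr (X *m Y)) = \tr (X *m Y).
Proof.
move=> hX hY; rewrite conj_tr map_mxM herm_map // herm_map //.
by rewrite -trmx_mul mxtrace_tr mxtrace_mulC.
Qed.

Lemma conj_real_Re (z : C) : conjc z = z -> z = (complex.Re z)%:C.
Proof.
case: z => a b /= [] h; congr Complex.
by lra.
Qed.

Lemma herm_tr p (X : 'M[C]_p) : Defs.hermitian X -> Defs.hermitian X^T.
Proof. by rewrite /Defs.hermitian adjmx_tr => ->. Qed.

End Aux.

Section Real.
Variable R : rcfType.
Local Notation C := R[i].

Lemma trace_proj (n r : nat) (P : 'M[R]_n) : orth_proj r P -> \tr P = r%:R.
Proof.
case=> _ [PP rk].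
set Cb := col_base P; set Rb := row_base P.
have hP : Cb *m Rb = P by apply: mulmx_base.
have RC : Rb *m Cb = 1%:M.
  apply: (row_full_inj (col_base_full P)); apply: (row_free_inj (row_base_free P)).
  have e : Cb *m (Rb *m Cb) *m Rb = (Cb *m Rb) *m (Cb *m Rb) by rewrite !mulmxA.
  by rewrite /= -/Cb -/Rb e mulmx1 hP PP.
by rewrite -hP mxtrace_mulC RC mxtrace1 rk.
Qed.

Lemma frob2_tr p q (Y : 'M[R]_(p, q)) : frob2 Y = \tr (Y *m Y^T).
Proof.
rewrite /frob2 /mxtrace; apply: eq_bigr => i _; rewrite mxE.
by apply: eq_bigr => j _; rewrite mxE expr2.
Qed.

End Real.


Section Main.
Local Open Scope complex_scope.
Variable R : rcfType.
Local Notation C := R[i].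
Variable m : nat.
Hypothesis hm : (0 < m)%N.
Variables lamA lamB : 'I_(m ^ 2 - 1) -> 'M[C]_m.
Hypothesis hA : su_generators lamA.
Hypothesis hB : su_generators lamB.

Let t i j := \tr (lamA i *m (lamB j)^T).

Lemma t_real i j : t i j = (complex.Re (t i j))%:C.
Proof.
apply: conj_real_Re; apply: herm_tr_real; first by case: hA.
by apply: herm_tr; case: hB.
Qed.

Lemma t_orth i k : \sum_j t i j * t k j = (4 * (i == k)%:R : R)%:C.
Proof.
case: hA => _ [hA0 hA2]; case: hB => _ [hB0 hB2].
have := @complete_sum R m hm (fun j => (lamB j)^T) _ _ (lamA i) (lamA k) (hA0 i).
rewrite hA2 => h.
have -> : \sum_j t i j * t k j = 2 * (\sum_j \tr (lamA i *m (lamB j)^T) / 2 *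
     \tr ((lamB j)^T *m lamA k)).
  rewrite mulr_sumr; apply: eq_bigr => j _; rewrite /t [\tr ((lamB j)^T *m _)]mxtrace_mulC.
  have t0 : (2 : C) != 0 by rewrite pnatr_eq0.
  by field.
rewrite -h; last 2 first.
- by move=> j; rewrite mxtrace_tr.
- by move=> j l; rewrite -trmx_mul mxtrace_tr hB2 eq_sym.
have natC n : (n%:R : R)%:C = n%:R :> C by rewrite rmorph_nat.
by rewrite !rmorphM /= !natC mulrA -natrM.
Qed.

Let O := \matrix_(i, j) complex.Re (t i j).

Let natC n : (n%:R : R)%:C = n%:R :> C.
Proof. by rewrite rmorph_nat. Qed.

Lemma OOt : O *m O^T = 4%:M.
Proof.
apply/matrixP => i k; rewrite !mxE; apply: complexI.
rewrite rmorph_sum /=.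
under eq_bigr => j _ do rewrite !mxE rmorphM /= -!t_real.
by rewrite t_orth mulr_natr.
Qed.

Lemma blochT : bloch_T lamA lamB (max_ent_state R m) = (m%:R / 4) *: O.
Proof.
apply/matrixP => i j; rewrite !mxE tr_tens_rho -/(t i j) t_real.
rewrite -natC -fmorphV -!rmorphM /= natrM.
have mn0 : (m%:R : R) != 0 by rewrite pnatr_eq0 -lt0n.
by field.
Qed.

Lemma blochx : bloch_x lamA (max_ent_state R m) = 0.
Proof.
case: hA => _ [hA0 _].
apply/matrixP => k l; rewrite !mxE tr_tens_rho trmx1 mulmx1 hA0 !mulr0.
by [].
Qed.

Lemma calT_sq :
  let calT := bloch_calT lamA lamB (max_ent_state R m) in
  calT *m calT^T = ((m%:R ^+ 2)^-1 : R)%:M.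
Proof.
rewrite /bloch_calT blochx blochT.
set s1 := Num.sqrt _; set s2 := Num.sqrt _; set c := (m%:R / 4 : R).
have mn0 : (m%:R : R) != 0 by rewrite pnatr_eq0 -lt0n.
have h1 : s1 * s1 = 2 / (m ^ 2 * m)%:R.
  by rewrite -expr2 sqr_sqrtr // divr_ge0 ?ler0n.
have h2 : s2 * s2 = 2 / m%:R.
  by rewrite -expr2 sqr_sqrtr // divr_ge0 ?ler0n.
rewrite !linearZ /= tr_row_mx !linearZ /= trmx0 -scalemxAl.
rewrite mul_row_col mul0mx add0r -!scalemxAl -!scalemxAr OOt !scalerA scale_scalar_mx.
congr (_%:M).
transitivity ((s1 * s1) * (s2 * s2) * c * c * 4); first by ring.
rewrite h1 h2 /c natrM natrX.
by field.
Qed.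

Lemma DP_main : DP_is lamA lamB (max_ent_state R m) ((m%:R - 1) / m%:R).
Proof.
have key P : orth_proj (m - 1) P ->
    frob2 (bloch_calT lamA lamB (max_ent_state R m) -
           P *m bloch_calT lamA lamB (max_ent_state R m)) = (m%:R - 1) / m%:R.
  move=> hP; have trP := trace_proj hP.
  case: hP => PT [PP _].
  rewrite -{1}(mul1mx (bloch_calT _ _ _)) -mulmxBl frob2_tr trmx_mul.
  rewrite mulmxA -(mulmxA _ _ (bloch_calT _ _ _)^T) calT_sq mul_mx_scalar.
  rewrite -scalemxAl mxtraceZ linearB /= trmx1 PT mulmxBr mulmx1 !mulmxBl PP mul1mx.
  rewrite subrr subr0 linearB /= mxtrace1 trP.
  have mn0 : (m%:R : R) != 0 by rewrite pnatr_eq0 -lt0n.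
  rewrite natrB; last by rewrite expn_gt0 hm.
  rewrite natrB // natrX.
  by field.
split; last by move=> P hP; rewrite key.
have hP0 : orth_proj (m - 1) (pid_mx (m - 1) : 'M[R]_(m ^ 2 - 1)).
  split; first by rewrite tr_pid_mx.
  have le : (m - 1 <= m ^ 2 - 1)%N.
    by apply: leq_sub2r; rewrite -mulnn leq_pmulr.
  split; first by rewrite pid_mx_id.
  by rewrite rank_pid_mx.
by exists (pid_mx (m - 1)); split => //; apply: key.
Qed.

End Main.



Unset Implicit Arguments.

Theorem mainTheorem5 (R : realType) (m : nat) (hm : (0 < m)%N)
    (lamA lamB : 'I_(m ^ 2 - 1) -> 'M[R[i]]_m)
    (hA : su_generators lamA) (hB : su_generators lamB) :
  DP_is lamA lamB (max_ent_state R m) ((m%:R - 1) / m%:R) /\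
  DG_is (max_ent_state R m) ((m%:R - 1) / m%:R).
Proof.
split; first exact: DP_main.
split; first exact: DG_exist.
by move=> chi hchi; apply: DG_lower.
Qed.
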